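(* Let $\alpha\in\Lambda$ be an infinite multiindex. For any $\beta,\gamma\in\Lambda$ the limit \[ q(\gamma,\beta)=\lim_{m\to\infty} q\big((\gamma_1,\dots,\gamma_m),(\beta_1,\dots,\beta_m)\big) \] exists. Moreover, on the complex vector space $\tilde H_\alpha$ having as a basis the formal symbols $e_\beta$, $\beta\sim\alpha$, the sesquilinear form determined by \[ (e_\beta,e_\gamma)=q(\gamma,\beta),\qquad \beta,\gamma\sim\alpha, \] is Hermitian and positive, i.e. $\sum_{k,l} c_k\overline{c_l}\,(e_{\beta^{(k)}},e_{\beta^{(l)}})\ge 0$ for all finite families of scalars $c_k$ and multiindices $\beta^{(k)}\sim\alpha$. In addition, $(e_\beta,e_\gamma)=0$ unless there exists $m$ with $\sigma^m(\beta)=\sigma^m(\gamma)$, in which case $(e_\beta,e_\gamma)=(e_{(\beta_1,\dots,\beta_m)},e_{(\gamma_1,\dots,\gamma_m)})_{\mathcal F}$.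
   Context: Fix $d\ge 2$ and complex numbers $q_{ij}$, $1\le i\ne j\le d$, with $|q_{ij}|<1$ and $q_{ij}=\overline{q_{ji}}$. Let $W$ be the universal $C^*$-algebra generated by $s_1,\dots,s_d$ subject to $s_i^*s_i=I$ and $s_i^*s_j=q_{ij}s_js_i^*$ for $i\ne j$. Let $\Lambda_m=\{1,\dots,d\}^m$ (with $\Lambda_0$ consisting of the empty multiindex $\emptyset$), $\Lambda^0=\bigcup_{m\ge0}\Lambda_m$, and $\Lambda=\{1,\dots,d\}^{\mathbb N}$ the set of infinite multiindices. For finite $\alpha=(\alpha_1,\dots,\alpha_m)$ put $s_\alpha=s_{\alpha_1}\cdots s_{\alpha_m}$, $s_\emptyset=I$. The shift is $\sigma(\alpha_1,\alpha_2,\dots)=(\alpha_2,\alpha_3,\dots)$. Two infinite multiindices are equivalent, $\beta\sim\alpha$, if there are $m,n\ge0$ with $\sigma^m(\beta)=\sigma^n(\alpha)$. Fock representation: $\pi_F$ is the $*$-representation of $W$ on a Hilbert space $\mathcal F$ with a unit vector $\Omega$ such that $\pi_F(s_j)^*\Omega=0$ for all $j$ and the vectors $e_\alpha=\pi_F(s_\alpha)\Omega$, $\alpha\in\Lambda^0$, span a dense subspace; $\mathcal F_n=\mathrm{span}\{e_\alpha:\alpha\in\Lambda_n\}$, and these subspaces are mutually orthogonal. For finite $\alpha,\beta\in\Lambda_m$ define $q(\alpha,\beta)=\langle \pi_F(s_\alpha)^*\pi_F(s_\beta)\Omega,\Omega\rangle=(e_\beta,e_\alpha)_{\mathcal F}$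 (this is nonzero only if $\beta$ is a permutation of $\alpha$). *)

(* Defs.v *)
From HB Require Import structures.
From mathcomp Require Import all_boot all_order all_algebra.
From mathcomp Require Import all_classical all_reals.
From mathcomp Require Import complex.
Set Implicit Arguments. Unset Strict Implicit. Unset Printing Implicit Defensive.
Import Order.TTheory GRing.Theory Num.Theory.
Local Open Scope ring_scope.

(* Finite multiindices: seq 'I_d.  Infinite multiindices: nat -> 'I_d. *)
Definition infmi (d : nat) := nat -> 'I_d.

Definition shift (d : nat) (m : nat) (b : infmi d) : infmi d :=
  fun n => b (n + m)%N.

Definition mi_equiv (d : nat) (b a : infmi d) : Prop :=
  exists m n : nat, shift m b = shift n a.

Definition trunc (d : nat) (b : infmi d) (m : nat) : seq 'I_d := mkseq b m.

(* A Fock representation of the relations of W:  a complex (pre-)Hilbert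
   space H with inner product fip (linear in the first, conjugate-linear in
   the second variable), operators fS j = pi_F(s_j) with adjoints fSa j =
   pi_F(s_j)^*, satisfying the defining relations of W, and a unit vacuum
   vector fOmega with fSa j fOmega = 0. *)
Record FockRep (R : realType) (d : nat) (q : 'I_d -> 'I_d -> R[i]) := {
  fH : lmodType R[i];
  fip : fH -> fH -> R[i];
  ip_linl : forall (a : R[i]) (x y z : fH), fip (a *: x + y) z = a * fip x z + fip y z;
  ip_herm : forall x y : fH, fip x y = (fip y x)^*;
  ip_pos : forall x : fH, 0 <= fip x x;
  ip_def : forall x : fH, fip x x = 0 -> x = 0;
  fS : 'I_d -> fH -> fH;
  fSa : 'I_d -> fH -> fH;
  S_lin : forall j (a : R[i]) (x y : fH), fS j (a *: x + y) = a *: fS j x + fS j y;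
  Sa_lin : forall j (a : R[i]) (x y : fH), fSa j (a *: x + y) = a *: fSa j x + fSa j y;
  S_adj : forall j (x y : fH), fip (fS j x) y = fip x (fSa j y);
  rel_iso : forall j (x : fH), fSa j (fS j x) = x;
  rel_q : forall i j (x : fH), i != j -> fSa i (fS j x) = q i j *: fS j (fSa i x);
  fOmega : fH;
  Omega_unit : fip fOmega fOmega = 1;
  Sa_Omega : forall j, fSa j fOmega = 0
}.

(* pi_F(s_a) x = fS a_1 (fS a_2 (... (fS a_m x))) *)
Arguments fS {R d q} f _ _.
Arguments fSa {R d q} f _ _.
Arguments fip {R d q} f _ _.
Arguments fOmega {R d q} f.
Definition Sword R d q (F : @FockRep R d q) (a : seq 'I_d) (x : fH F) : fH F :=
  foldr (fun j y => fS F j y) x a.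

(* pi_F(s_a)^* x = fSa a_m (... (fSa a_1 x)) *)
Definition Saword R d q (F : @FockRep R d q) (a : seq 'I_d) (x : fH F) : fH F :=
  foldl (fun y j => fSa F j y) x a.

Arguments Sword {R d q} F a x.
Arguments Saword {R d q} F a x.

(* q(a,b) = < pi_F(s_a)^* pi_F(s_b) fOmega, fOmega > for finite a, b. *)
Definition qF R d q (F : @FockRep R d q) (a b : seq 'I_d) : R[i] :=
  fip F (Saword F a (Sword F b (fOmega F))) (fOmega F).

Definition fock_ip R d q (F : @FockRep R d q) (b a : seq 'I_d) : R[i] :=
  fip F (Sword F b (fOmega F)) (Sword F a (fOmega F)).

Arguments qF {R d q} F a b.
Arguments fock_ip {R d q} F b a.

Definition seq_cvg_to (C : numFieldType) (u : nat -> C) (l : C) : Prop :=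
  forall eps : C, 0 < eps -> exists N : nat, forall m : nat, (N <= m)%N -> `|u m - l| < eps.

(* Main.v *)
Require Import Defs.
From HB Require Import structures.
From mathcomp Require Import all_boot all_order all_algebra.
From mathcomp Require Import all_classical all_reals.
From mathcomp Require Import complex.
From mathcomp Require Import zify ring lra.
Import Order.TTheory GRing.Theory Num.Theory.
Set Implicit Arguments. Unset Strict Implicit. Unset Printing Implicit Defensive.
Local Open Scope ring_scope.

Section Comb.
Variable R : realType.
Variable d : nat.
Variable q : 'I_d -> 'I_d -> R[i].

Fixpoint ga (i : 'I_d) (b : seq 'I_d) : R[i] :=
  match b with [::] => 0 | j :: b' => if j == i then 1 else q i j * ga i b' end.

Fixpoint qw (a b : seq 'I_d) : R[i] :=
  match a with [::] => (b == [::])%:R | i :: a' => ga i b * qw a' (rem i b) end.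

Fixpoint cost (a b : seq 'I_d) : nat :=
  match a with [::] => 0%N | i :: a' => (index i b + cost a' (rem i b))%N end.

Lemma ga_notin (i : 'I_d) (b : seq 'I_d) : i \notin b -> ga i b = 0.
Proof.
elim: b => //= j b IH; rewrite in_cons negb_or => /andP[/negPf ij /IH ->].
by rewrite eq_sym ij mulr0.
Qed.

Lemma ga_cat i b w : i \in b -> ga i (b ++ w) = ga i b.
Proof.
elim: b => //= j b IH; rewrite in_cons; case: eqP => [->|ij] //=.
by rewrite eq_refl.
move=> /IH ->; case: eqP => // e; by case: ij.
Qed.

Lemma rem_catl (i : 'I_d) b w : i \in b -> rem i (b ++ w) = rem i b ++ w.
Proof.
elim: b => //= j b IH; rewrite in_cons; case: eqP => [->|ij] /=.
  by rewrite eq_refl.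
move=> /IH ->; case: eqP => // e; by case: ij.
Qed.

Lemma qw_perm a b : qw a b != 0 -> perm_eq a b.
Proof.
elim: a b => [|i a IH] b /=.
  by case: b => //= ? ?; rewrite eqxx.
rewrite mulf_eq0 negb_or => /andP[g /IH p].
have ib : i \in b by apply: contraNT g => /ga_notin ->.
apply: (@perm_trans _ (i :: rem i b)); [by rewrite perm_cons | by rewrite perm_sym perm_to_rem].
Qed.

Lemma qw_nn w : qw w w = 1.
Proof. elim: w => //= i w IH; rewrite !eqxx /= ?eqxx IH mulr1 //. Qed.

Lemma qw_cat g b w : qw (g ++ w) (b ++ w) = qw g b.
Proof.
elim: g b => [|i g IH] b /=.
  case: b => [|j b] /=; first exact: qw_nn.
  apply/eqP; apply: contraT => /qw_perm /perm_size /=.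
  rewrite size_cat; lia.
case ib : (i \in b).
  by rewrite ga_cat // rem_catl // IH.
rewrite (ga_notin (negbT ib)) mul0r; apply/eqP; apply: contraT => H.
have p := @qw_perm (i :: g ++ w) (b ++ w) H.
have : perm_eq (i :: g) b by rewrite -(perm_cat2r w).
by move=> /perm_mem /(_ i); rewrite ib mem_head.
Qed.

Lemma cost_cat g b u v : perm_eq g b -> cost (g ++ u) (b ++ v) = (cost g b + cost u v)%N.
Proof.
elim: g b => [|i g IH] b /=.
  by move=> /perm_size; case: b.
move=> p; have ib : i \in b by rewrite -(perm_mem p) mem_head.
have p' : perm_eq g (rem i b).
  by rewrite -(perm_cons i); apply: (perm_trans p); rewrite perm_to_rem.
rewrite index_cat ib rem_catl // IH //; lia.
Qed.

Lemma cost0 u v : perm_eq u v -> cost u v = 0%N -> u = v.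
Proof.
elim: u v => [|i u IH] v /=.
  by move=> /perm_size; case: v.
case: v => [|j v] /=; first by move=> /perm_size.
case: eqP => [->|ij] //=.
  rewrite perm_cons => p c; rewrite (IH v) //.
Qed.

End Comb.

Section Fock.
Variable R : realType.
Variable d : nat.
Variable q : 'I_d -> 'I_d -> R[i].
Variable F : FockRep q.
Local Notation H := (fH F).
Local Notation Om := (fOmega F).
Local Notation ip := (fip F).

Lemma fS0 j : fS F j 0 = 0.
Proof.
have := @S_lin _ _ _ F j 1 0 0; rewrite !scale1r addr0 => h.
by apply: (@addrI _ (fS F j 0)); rewrite addr0 -h.
Qed.

Lemma fSZ j a (x : H) : fS F j (a *: x) = a *: fS F j x.
Proof. by have := @S_lin _ _ _ F j a x 0; rewrite !addr0 fS0 addr0. Qed.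

Lemma fSa0 j : fSa F j 0 = 0.
Proof.
have := @Sa_lin _ _ _ F j 1 0 0; rewrite !scale1r addr0 => h.
by apply: (@addrI _ (fSa F j 0)); rewrite addr0 -h.
Qed.

Lemma fSaZ j a (x : H) : fSa F j (a *: x) = a *: fSa F j x.
Proof. by have := @Sa_lin _ _ _ F j a x 0; rewrite !addr0 fSa0 addr0. Qed.

Lemma ip0 (y : H) : ip 0 y = 0.
Proof.
have := @ip_linl _ _ _ F 1 0 0 y; rewrite !scale1r addr0 mul1r => h.
by apply: (@addrI _ (ip 0 y)); rewrite addr0 -h.
Qed.

Lemma ipZ a (x y : H) : ip (a *: x) y = a * ip x y.
Proof. by have := @ip_linl _ _ _ F a x 0 y; rewrite !addr0 ip0 addr0. Qed.

Lemma ipD (x x' y : H) : ip (x + x') y = ip x y + ip x' y.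
Proof. by have := @ip_linl _ _ _ F 1 x x' y; rewrite scale1r mul1r. Qed.

Lemma ip_herm' (x y : H) : ip x y = (ip y x)^*.
Proof. exact: ip_herm. Qed.

Lemma ipSa j (x z : H) : ip (fSa F j x) z = ip x (fS F j z).
Proof.
by rewrite ip_herm' -(@S_adj _ _ _ F) [RHS]ip_herm'.
Qed.

Lemma SawordZ a c (x : H) : Saword F a (c *: x) = c *: Saword F a x.
Proof.
elim: a x => //= i a IH x.
by rewrite /Saword /= -/(Saword F a _) fSaZ IH.
Qed.

Lemma Saword_cons i a (x : H) : Saword F (i :: a) x = Saword F a (fSa F i x).
Proof. by []. Qed.

Lemma Sword_cons i a (x : H) : Sword F (i :: a) x = fS F i (Sword F a x).
Proof. by []. Qed.

Lemma fSa_Sword i b : fSa F i (Sword F b Om) = ga q i b *: Sword F (rem i b) Om.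
Proof.
elim: b => [|j b IH] /=.
  by rewrite (@Sa_Omega _ _ _ F) scale0r.
rewrite -/(Sword F b Om).
case: eqP => [->|ij].
  by rewrite (@rel_iso _ _ _ F) scale1r.
have ij' : i != j by apply/eqP => e; apply: ij; rewrite e.
rewrite (@rel_q _ _ _ F _ _ _ ij') IH fSZ scalerA.
by rewrite Sword_cons.
Qed.

Lemma ip_Sword_Om c : ip (Sword F c Om) Om = (c == [::])%:R.
Proof.
case: c => [|j c] /=; first exact: (@Omega_unit _ _ _ F).
rewrite -/(Sword F c Om) ip_herm' -ipSa (@Sa_Omega _ _ _ F) ip0.
by rewrite conjC0.
Qed.

Lemma qF_qw a b : qF F a b = qw q a b.
Proof.
rewrite /qF; elim: a b => [|i a IH] b /=.
  exact: ip_Sword_Om.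
by rewrite fSa_Sword SawordZ ipZ IH.
Qed.

Lemma ip_Saword a (x y : H) : ip (Saword F a x) y = ip x (Sword F a y).
Proof.
elim: a x => [|i a IH] x //=.
by rewrite IH ipSa.
Qed.

Lemma qF_fock a b : qF F a b = fock_ip F b a.
Proof. by rewrite /qF ip_Saword. Qed.

End Fock.

Section Trunc.
Variable d : nat.

Lemma trunc_split (b : infmi d) m0 m : (m0 <= m)%N ->
  trunc b m = trunc b m0 ++ trunc (shift m0 b) (m - m0).
Proof.
move=> le; rewrite /trunc /mkseq -{1}(subnKC le) iotaD map_cat add0n.
congr (_ ++ _); rewrite -{1}(addn0 m0) iotaDl -map_comp; apply: eq_map => k /=.
by rewrite /shift addnC.
Qed.

Lemma nth_trunc (b : infmi d) m k x0 : (k < m)%N -> nth x0 (trunc b m) k = b k.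
Proof. by move=> km; rewrite /trunc nth_mkseq. Qed.

Lemma size_trunc (b : infmi d) m : size (trunc b m) = m.
Proof. by rewrite size_mkseq. Qed.

End Trunc.

Section Lim.
Variable R : realType.
Variable d : nat.
Variable q : 'I_d -> 'I_d -> R[i].

Lemma qw_stable (beta gamma : infmi d) n m : shift n beta = shift n gamma -> (n <= m)%N ->
  qw q (trunc gamma m) (trunc beta m) = qw q (trunc gamma n) (trunc beta n).
Proof.
move=> e le; rewrite (trunc_split gamma le) (trunc_split beta le) e.
exact: qw_cat.
Qed.

Lemma decay (beta gamma : infmi d) : (forall n, shift n beta <> shift n gamma) ->
  forall K, exists N, forall m, (N <= m)%N -> perm_eq (trunc gamma m) (trunc beta m) ->
    (K <= cost (trunc gamma m) (trunc beta m))%N.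
Proof.
move=> nt; elim=> [|K [N HN]]; first by exists 0%N.
have [[m0 [Nm0 P0]]|none] := pselect (exists m0, (N <= m0)%N /\
    perm_eq (trunc gamma m0) (trunc beta m0)); last first.
  exists N => m Nm P; exfalso; apply: none; by exists m.
have [k hk] : exists k, beta (k + m0)%N <> gamma (k + m0)%N.
  apply: contrapT => hk; apply: (nt m0); apply: funext => k /=.
  rewrite /shift; apply: contrapT => h; apply: hk; by exists k.
exists (k + m0).+1 => m le P.
have le0 : (m0 <= m)%N by lia.
move: P; rewrite (trunc_split gamma le0) (trunc_split beta le0) => P.
have Pseg : perm_eq (trunc (shift m0 gamma) (m - m0)) (trunc (shift m0 beta) (m - m0)).
  by rewrite -(perm_cat2l (trunc gamma m0)) (perm_trans P) // perm_cat2r perm_sym.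
rewrite cost_cat //.
have := HN m0 Nm0 P0.
suff : cost (trunc (shift m0 gamma) (m - m0)) (trunc (shift m0 beta) (m - m0)) <> 0%N by lia.
move/(cost0 Pseg) => /(congr1 (fun s => nth (gamma 0%N) s k)).
rewrite !nth_trunc; try lia.
by rewrite /shift => e; apply: hk.
Qed.

End Lim.

Section Bound.
Variable R : realType.
Variable d : nat.
Variable q : 'I_d -> 'I_d -> R[i].

Lemma normC_real (z : R[i]) : `|z| = (complex.Re `|z|)%:C%C.
Proof. by rewrite normc_def. Qed.

Lemma cbound : (forall i j : 'I_d, i != j -> `|q i j| < 1) ->
  exists c : R, [/\ 0 <= c, c < 1 & forall i j, i != j -> `|q i j| <= c%:C%C].
Proof.
move=> hq.
pose c := \big[Num.max/0]_(p : 'I_d * 'I_d | p.1 != p.2) complex.Re `|q p.1 p.2|.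
exists c; split.
- rewrite /c; elim/big_rec: _ => // p x _ hx; by rewrite le_max hx orbT.
- rewrite /c; elim/big_rec: _ => // p x np hx; rewrite gt_max hx andbT.
  by have := hq _ _ np; rewrite normC_real -(@ltcR R) => ->.
- move=> i j ij; rewrite normC_real lecR /c.
  rewrite (bigD1 (i, j)) //=; by rewrite le_max lexx.
Qed.

Variable c : R.
Hypothesis c0 : 0 <= c.
Hypothesis hc : forall i j : 'I_d, i != j -> `|q i j| <= c%:C%C.

Lemma ga_bound i b : `|ga q i b| <= (c ^+ index i b)%:C%C.
Proof.
elim: b => [|j b IH] /=; first by rewrite normr0 lecR exprn_ge0.
case: (j =P i) => [_|ij]; first by rewrite normr1 expr0.
rewrite normrM exprS rmorphM /=; apply: ler_pM => //.
apply: hc; apply/eqP => e; apply: ij; by rewrite e.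
Qed.

Lemma qw_bound a b : `|qw q a b| <= (c ^+ cost a b)%:C%C.
Proof.
elim: a b => [|i a IH] b /=.
  case: (b == [::]); by rewrite ?normr1 ?normr0 expr0 ?ler01.
rewrite normrM exprD rmorphM /=; apply: ler_pM => //; exact: ga_bound.
Qed.

End Bound.

Lemma exp_small (R : realType) (c e : R) : 0 <= c -> c < 1 -> 0 < e ->
  exists K : nat, c ^+ K < e.
Proof.
move=> c0 c1 e0.
have [->|cn0] := eqVneq c 0; first by exists 1%N; rewrite expr1.
have cp : 0 < c by rewrite lt0r cn0.
pose del := c^-1 - 1.
have dp : 0 < del by rewrite /del subr_gt0 invf_gt1.
have bern : forall n : nat, 1 + n%:R * del <= (1 + del) ^+ n.
  elim=> [|n IH]; first by rewrite mul0r addr0 expr0.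
  rewrite exprS; apply: (le_trans _ (ler_pM _ _ (lexx _) IH)); last first.
  - by rewrite addr_ge0 // mulr_ge0 // ltW.
  - by rewrite ltW // addr_gt0.
  rewrite -natr1.
  have : 0 <= del * (n%:R * del) by rewrite mulr_ge0 // ?mulr_ge0 // ltW.
  lra.
have ep : 0 <= (e * del)^-1 by rewrite invr_ge0 ltW // mulr_gt0.
set K := Num.Def.archi_bound (e * del)^-1.
have hK := archi_boundP ep.
exists K.
have e1 : 1 + del = c^-1 by rewrite /del addrC subrK.
have h1 : e^-1 < (1 + del) ^+ K.
  apply: (lt_le_trans _ (bern K)).
  have -> : e^-1 = (e * del)^-1 * del.
    by field; rewrite ?lt0r_neq0 // ?mulr_gt0.
  have : (e * del)^-1 * del < K%:R * del by rewrite ltr_pM2r.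
  lra.
move: h1; rewrite e1 exprVn ltf_pV2 // posrE ?exprn_gt0 // invr_gt0.
Qed.

Section Cvg.
Variable C : numFieldType.

Lemma cvg_ev (u : nat -> C) l : (exists N, forall m, (N <= m)%N -> u m = l) -> seq_cvg_to u l.
Proof. move=> [N HN] e e0; exists N => m /HN ->; by rewrite subrr normr0. Qed.

Lemma cvg_add (u v : nat -> C) a b : seq_cvg_to u a -> seq_cvg_to v b ->
  seq_cvg_to (fun m => u m + v m) (a + b).
Proof.
move=> hu hv e e0.
have e2 : 0 < e / 2%:R by rewrite divr_gt0 // ltr0n.
have [N1 h1] := hu _ e2; have [N2 h2] := hv _ e2.
exists (maxn N1 N2) => m; rewrite geq_max => /andP[m1 m2].
have -> : u m + v m - (a + b) = (u m - a) + (v m - b) by rewrite opprD addrACA.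
apply: (le_lt_trans (ler_normD _ _)).
have := h1 _ m1; have := h2 _ m2.
rewrite {3}(splitr e).
move=> a1 a2; exact: ltrD.
Qed.

Lemma cvg_scale (u : nat -> C) a w : seq_cvg_to u a -> seq_cvg_to (fun m => w * u m) (w * a).
Proof.
move=> hu e e0.
have [->|w0] := eqVneq w 0.
  by exists 0%N => m _; rewrite !mul0r subrr normr0.
have nw : 0 < `|w| by rewrite normr_gt0.
have [N hN] := hu _ (divr_gt0 e0 nw).
exists N => m /hN h; rewrite -mulrBr normrM.
by rewrite -ltr_pdivlMl // mulrC.
Qed.

Lemma cvg_sum (I : Type) (r : seq I) (u : I -> nat -> C) (l : I -> C) :
  (forall k, seq_cvg_to (u k) (l k)) ->
  seq_cvg_to (fun m => \sum_(k <- r) u k m) (\sum_(k <- r) l k).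
Proof.
move=> hu; elim: r => [|k r IH].
  apply: cvg_ev; exists 0%N => m _; by rewrite !big_nil.
have := cvg_add (hu k) IH.
move=> h e e0; have [N hN] := h e e0; exists N => m /hN.
by rewrite !big_cons.
Qed.

Lemma cvg_ge0 (u : nat -> C) l : seq_cvg_to u l -> (forall m, 0 <= u m) -> 0 <= l.
Proof.
move=> hu pos.
suff : `|l| - l = 0 by move/eqP; rewrite subr_eq0 => /eqP <-.
apply/eqP; apply: contraT => D.
have D0 : 0 < `| `|l| - l| / 2%:R by rewrite divr_gt0 ?normr_gt0 // ltr0n.
have [N hN] := hu _ D0.
have h := hN N (leqnn N).
have : `| `|l| - l| <= 2%:R * `|u N - l|.
  have -> : `|l| - l = (`|l| - `|u N|) + (u N - l) by rewrite (ger0_norm (pos N)) addrA subrK.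
  apply: (le_trans (ler_normD _ _)).
  rewrite mulr_natl mulr2n lerD2r.
  by apply: (le_trans (ler_dist_dist _ _)); rewrite distrC.
have : 2%:R * `|u N - l| < `| `|l| - l|.
  by rewrite mulrC -ltr_pdivlMr ?ltr0n.
move=> a b; have := lt_le_trans a b; by rewrite ltxx.
Qed.

End Cvg.

Lemma decay_cvg (R : realType) (d : nat) (q : 'I_d -> 'I_d -> R[i]) (c : R) :
  0 <= c -> c < 1 -> (forall i j : 'I_d, i != j -> `|q i j| <= c%:C%C) ->
  forall beta gamma : infmi d, (forall n, shift n beta <> shift n gamma) ->
  seq_cvg_to (fun m => qw q (trunc gamma m) (trunc beta m)) 0.
Proof.
move=> c0 c1 hc beta gamma nt eps eps0.
have er : eps \is Num.real by exact: gtr0_real.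
have ee := RRe_real er.
have e0 : 0 < complex.Re eps by move: eps0; rewrite -ee ltcR.
have [K hK] := exp_small c0 c1 e0.
have [N hN] := decay nt K.
exists N => m Nm; rewrite subr0.
have [->|nz] := eqVneq (qw q (trunc gamma m) (trunc beta m)) 0; first by rewrite normr0.
have hc' := hN m Nm (qw_perm nz).
apply: (le_lt_trans (qw_bound c0 hc _ _)).
rewrite -ee ltcR; apply: (le_lt_trans _ hK).
rewrite -(subnKC hc') exprD; apply: ler_piMr; first exact: exprn_ge0.
by apply: exprn_ile1 => //; exact: ltW.
Qed.

Definition qlimD (R : realType) (d : nat) (q : 'I_d -> 'I_d -> R[i]) (gamma beta : infmi d) : R[i] :=
  match pselect (exists n, shift n beta = shift n gamma) with
  | left H => qw q (trunc gamma (proj1_sig (cid H))) (trunc beta (proj1_sig (cid H)))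
  | right _ => 0
  end.

Lemma qlim_tail (R : realType) (d : nat) (q : 'I_d -> 'I_d -> R[i]) (gamma beta : infmi d) n :
  shift n beta = shift n gamma -> qlimD q gamma beta = qw q (trunc gamma n) (trunc beta n).
Proof.
move=> e; rewrite /qlimD; case: pselect => [H|H]; last by exfalso; apply: H; exists n.
case: (cid H) => n0 e0 /=.
rewrite -(qw_stable q e0 (leq_maxl n0 n)) -(qw_stable q e (leq_maxr n0 n)) //.
Qed.

Lemma qlim_notail (R : realType) (d : nat) (q : 'I_d -> 'I_d -> R[i]) (gamma beta : infmi d) :
  (forall n, shift n beta <> shift n gamma) -> qlimD q gamma beta = 0.
Proof.
move=> nt; rewrite /qlimD; case: pselect => [[n e]|//]; by case: (nt n).
Qed.

Unset Implicit Arguments.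

Theorem mainTheorem1 (R : realType) (d : nat) (q : 'I_d -> 'I_d -> R[i])
  (hd : (2 <= d)%N)
  (hq_norm : forall i j : 'I_d, i != j -> `|q i j| < 1)
  (hq_conj : forall i j : 'I_d, i != j -> q i j = (q j i)^*)
  (F : FockRep q) (alpha : infmi d) :
  exists qlim : infmi d -> infmi d -> R[i],
    (* the limit q(gamma, beta) exists for all beta, gamma *)
    (forall beta gamma : infmi d,
       seq_cvg_to (fun m => qF F (trunc gamma m) (trunc beta m)) (qlim gamma beta))
    (* the form (e_beta, e_gamma) := q(gamma, beta) on H~_alpha is Hermitian *)
    /\ (forall beta gamma : infmi d, mi_equiv beta alpha -> mi_equiv gamma alpha ->
          qlim gamma beta = (qlim beta gamma)^*)
    (* ... and positive *)
    /\ (forall (n : nat) (c : 'I_n -> R[i]) (b : 'I_n -> infmi d),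
          (forall k, mi_equiv (b k) alpha) ->
          0 <= \sum_(k < n) \sum_(l < n) c k * (c l)^* * qlim (b l) (b k))
    (* (e_beta, e_gamma) = 0 unless sigma^m beta = sigma^m gamma for some m *)
    /\ (forall beta gamma : infmi d, mi_equiv beta alpha -> mi_equiv gamma alpha ->
          (forall m : nat, shift m beta <> shift m gamma) -> qlim gamma beta = 0)
    (* in which case it equals the Fock inner product of the truncations *)
    /\ (forall (beta gamma : infmi d) (m : nat),
          mi_equiv beta alpha -> mi_equiv gamma alpha ->
          shift m beta = shift m gamma ->
          qlim gamma beta = fock_ip F (trunc beta m) (trunc gamma m)).
Proof.
have [cc [c0 c1 hc]] := cbound hq_norm.
have conv : forall beta gamma : infmi d,
    seq_cvg_to (fun m => qF F (trunc gamma m) (trunc beta m)) (qlimD q gamma beta).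
  move=> beta gamma.
  have -> : (fun m => qF F (trunc gamma m) (trunc beta m)) =
            (fun m => qw q (trunc gamma m) (trunc beta m)).
    by apply: funext => m; rewrite qF_qw.
  have [[n e]|nt] := pselect (exists n, shift n beta = shift n gamma).
    rewrite (qlim_tail q e); apply: cvg_ev; exists n => m; exact: qw_stable.
  rewrite qlim_notail; last by move=> n e; apply: nt; exists n.
  by apply: (decay_cvg c0 c1 hc) => n e; apply: nt; exists n.
exists (qlimD q); split; first exact: conv.
split.
  move=> beta gamma _ _.
  have [[n e]|nt] := pselect (exists n, shift n beta = shift n gamma).
    rewrite (qlim_tail q e) (qlim_tail q (esym e)) -!(qF_qw F) !qF_fock /fock_ip.
    by rewrite (ip_herm (f:=F)).
  rewrite !qlim_notail ?conjC0 //.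
    by move=> n e; apply: nt; exists n.
  by move=> n e; apply: nt; exists n.
split.
  move=> n c b _.
  pose X m := \sum_(k < n) c k *: Sword F (trunc (b k) m) (fOmega F).
  apply: (@cvg_ge0 _ (fun m => fip F (X m) (X m))); last first.
    by move=> m; exact: ip_pos.
  have ex : forall m, fip F (X m) (X m) =
      \sum_(k < n) c k * \sum_(l < n) (c l)^* * qF F (trunc (b l) m) (trunc (b k) m).
    move=> m.
    have h1 : forall Y, fip F (X m) Y = \sum_(k < n) c k * fip F (Sword F (trunc (b k) m) (fOmega F)) Y.
      move=> Y; rewrite /X; elim/big_rec2: _ => [|k y1 y2 _ <-]; first exact: ip0.
      by rewrite ipD ipZ.
    rewrite h1; apply: eq_bigr => k _; congr (_ * _).
    rewrite ip_herm' /X; elim/big_rec2: _ => [|l y1 y2 _ <-]; first by rewrite ip0 conjC0.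
    rewrite ipD ipZ rmorphD rmorphM /= qF_fock /fock_ip; congr (_ * _ + _).
    by rewrite -ip_herm'.
  have -> : (fun m => fip F (X m) (X m)) = (fun m =>
      \sum_(k < n) c k * \sum_(l < n) (c l)^* * qF F (trunc (b l) m) (trunc (b k) m)).
    by apply: funext => m; rewrite ex.
  have -> : \sum_(k < n) \sum_(l < n) c k * (c l)^* * qlimD q (b l) (b k) =
      \sum_(k < n) c k * \sum_(l < n) (c l)^* * qlimD q (b l) (b k).
    by apply: eq_bigr => k _; rewrite mulr_sumr; apply: eq_bigr => l _; rewrite mulrA.
  apply: cvg_sum => k; apply: cvg_scale.
  apply: cvg_sum => l; apply: cvg_scale; exact: conv.
split.
  move=> beta gamma _ _ nt; exact: qlim_notail.
move=> beta gamma m _ _ e.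
by rewrite (qlim_tail q e) -(qF_qw F) qF_fock.
Qed.
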